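(* Let $I=\{1,\dots,\ell\}$, $J=\{\ell+1,\dots,p\}$, let $h_1,\dots,h_p\colon\mathbb R^n\times\mathbb R^m\to\overline{\mathbb R}$ be given and define $\Gamma\colon\mathbb R^n\rightrightarrows\mathbb R^m$ by $\Gamma(x):=\{y\in\mathbb R^m\mid h_i(x,y)\le 0\ (i\in I),\ h_i(x,y)=0\ (i\in J)\}$. Let $(\bar x,\bar y)\in\operatorname{gph}\Gamma$ and suppose that $\Gamma$ is R-regular at $(\bar x,\bar y)$ with respect to $\operatorname{dom}\Gamma$. Furthermore, let $h_1,\dots,h_p$ be continuous at $(\bar x,\bar y)$ and let $h_1(x,\cdot),\dots,h_p(x,\cdot)\colon\mathbb R^m\to\mathbb R$ be continuous for each $x\in\operatorname{dom}\Gamma$ from a neighborhood of $\bar x$. Then $\Gamma$ is inner semicontinuous at $(\bar x,\bar y)$ with respect to $\operatorname{dom}\Gamma$.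
   Context: $\operatorname{dom}\Gamma:=\{x\mid\Gamma(x)\neq\emptyset\}$, $\operatorname{gph}\Gamma:=\{(x,y)\mid y\in\Gamma(x)\}$; $\|\cdot\|$ is the Euclidean norm and $\operatorname{dist}(y,A):=\inf\{\|z-y\|\mid z\in A\}$ (equal to $+\infty$ if $A=\emptyset$). $\Gamma$ is called R-regular at $(\bar x,\bar y)\in\operatorname{gph}\Gamma$ with respect to $\Omega\subset\mathbb R^n$ if there exist $\kappa>0$ and a neighborhood $U$ of $(\bar x,\bar y)$ such that for all $(x,y)\in U\cap(\Omega\times\mathbb R^m)$: $\operatorname{dist}(y,\Gamma(x))\le\kappa\max\{0,\max_{i\in I}h_i(x,y),\max_{i\in J}|h_i(x,y)|\}$. A set-valued map $\Upsilon$ is inner semicontinuous at $(\bar x,\bar y)\in\operatorname{gph}\Upsilon$ with respect to $\Omega$ if for every sequence $\{x^k\}\subset\Omega$ with $x^k\to\bar x$ there is a sequence $y^k\to\bar y$ with $y^k\in\Upsilon(x^k)$ for all sufficiently large $k$. *)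

(* Defs.v *)
(* R^n is modelled as row vectors 'rV[R]_n; the
   topology (neighborhoods, convergence, continuity) is the canonical one on
   'rV[R]_n and on products, which coincides with the Euclidean topology. *)
From HB Require Import structures.
From mathcomp Require Import all_boot all_order all_algebra.
From mathcomp Require Import all_classical all_reals all_analysis.
Set Implicit Arguments. Unset Strict Implicit. Unset Printing Implicit Defensive.
Import Order.TTheory GRing.Theory Num.Theory.
Import numFieldNormedType.Exports.
Local Open Scope classical_set_scope.
Local Open Scope ring_scope.

Definition enorm {R : realType} {n : nat} (v : 'rV[R]_n) : R :=
  Num.sqrt (\sum_(i < n) v ord0 i ^+ 2).

(* dist(y, A) = inf { ||z - y|| : z in A }, = +oo if A is empty *)
Definition edist {R : realType} {m : nat} (y : 'rV[R]_m) (A : set 'rV[R]_m)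
  : \bar R := ereal_inf [set (enorm (z - y))%:E | z in A].

(* Indices 'I_p (0-based): I = {i | i < l}, J = {i | l <= i}. *)
Definition Gamma {R : realType} {n m p : nat} (l : nat)
  (h : 'I_p -> 'rV[R]_n * 'rV[R]_m -> \bar R) (x : 'rV[R]_n) : set 'rV[R]_m :=
  [set y | (forall i : 'I_p, (i < l)%N -> (h i (x, y) <= 0)%E) /\
           (forall i : 'I_p, (l <= i)%N -> h i (x, y) = 0%E)].

Definition domG {R : realType} {n m p : nat} (l : nat)
  (h : 'I_p -> 'rV[R]_n * 'rV[R]_m -> \bar R) : set 'rV[R]_n :=
  [set x | Gamma l h x !=set0].

Definition residual {R : realType} {n m p : nat} (l : nat)
  (h : 'I_p -> 'rV[R]_n * 'rV[R]_m -> \bar R) (x : 'rV[R]_n) (y : 'rV[R]_m)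
  : \bar R :=
  Order.max 0%E
    (Order.max (\big[Order.max/-oo%E]_(i < p | (i < l)%N) h i (x, y))
               (\big[Order.max/-oo%E]_(i < p | (l <= i)%N) `|h i (x, y)|%E)).

Definition R_regular {R : realType} {n m p : nat} (l : nat)
  (h : 'I_p -> 'rV[R]_n * 'rV[R]_m -> \bar R) (xb : 'rV[R]_n) (yb : 'rV[R]_m)
  (Omega : set 'rV[R]_n) : Prop :=
  exists kappa : R, 0 < kappa /\
  exists U : set ('rV[R]_n * 'rV[R]_m), nbhs (xb, yb) U /\
    forall x y, U (x, y) -> Omega x ->
      (edist y (Gamma l h x) <= kappa%:E * residual l h x y)%E.

Definition inner_semicontinuous {R : realType} {n m : nat}
  (Ups : 'rV[R]_n -> set 'rV[R]_m) (xb : 'rV[R]_n) (yb : 'rV[R]_m)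
  (Omega : set 'rV[R]_n) : Prop :=
  forall xk : nat -> 'rV[R]_n, (forall k, Omega (xk k)) -> xk @ \oo --> xb ->
    exists yk : nat -> 'rV[R]_m, yk @ \oo --> yb /\
      \forall k \near \oo, Ups (xk k) (yk k).

(* Main.v *)
Require Import Defs.
From HB Require Import structures.
From mathcomp Require Import all_boot all_order all_algebra.
From mathcomp Require Import all_classical all_reals all_analysis.
Import Order.TTheory GRing.Theory Num.Theory.
Import numFieldNormedType.Exports.
Local Open Scope classical_set_scope.
Local Open Scope ring_scope.

Lemma enorm_ge {R : realType} {m : nat} (v : 'rV[R]_m) : `|v| <= enorm v.
Proof.
rewrite [`|v|]mx_normrE; apply: bigmax_le; first exact: sqrtr_ge0.
move=> [i j] _ /=.
rewrite (ord1 i) -sqrtr_sqr /enorm ler_sqrt; last first.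
  by apply: sumr_ge0 => k _; exact: sqr_ge0.
rewrite (bigD1 j) //= lerDl; apply: sumr_ge0 => k _; exact: sqr_ge0.
Qed.

Theorem lemma2p5 (R : realType) (n m p l : nat) (hlp : (l <= p)%N)
  (h : 'I_p -> 'rV[R]_n * 'rV[R]_m -> \bar R)
  (xb : 'rV[R]_n) (yb : 'rV[R]_m)
  (hgph : Gamma l h xb yb)
  (hreg : R_regular l h xb yb (domG l h))
  (hcont : forall i : 'I_p, {for (xb, yb), continuous (h i)})
  (hcont2 : exists V : set 'rV[R]_n, nbhs xb V /\
     forall x, V x -> domG l h x -> forall i : 'I_p,
       (forall y, h i (x, y) \is a fin_num) /\
       continuous (fun y : 'rV[R]_m => fine (h i (x, y)))) :
  inner_semicontinuous (Gamma l h) xb yb (domG l h).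
Proof.
move=> xk Hdom Hxk.
case: hreg => kap [kap0 [U [HU Hreg]]].
have Hex : forall k, exists y, Gamma l h (xk k) y /\
   ((enorm (y - yb))%:E < Defs.edist yb (Gamma l h (xk k)) + (k.+1%:R^-1)%:E)%E.
  move=> k; have [z Hz] := Hdom k.
  have fin : Defs.edist yb (Gamma l h (xk k)) \is a fin_num.
    rewrite fin_numE; apply/andP; split.
      apply/eqP => Hinf.
      have : (0 <= Defs.edist yb (Gamma l h (xk k)))%E.
        by apply/ereal_infP => _ [z0 _ <-]; rewrite lee_fin sqrtr_ge0.
      by rewrite Hinf.
    rewrite -ltey; apply: (@le_lt_trans _ _ (enorm (z - yb))%:E); last exact: ltry.
    by apply: ereal_inf_lbound; exists z.
  have k0 : 0 < k.+1%:R^-1 :> R by rewrite invr_gt0 ltr0Sn.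
  have [_ [y Hy <-] Hlt] := lb_ereal_inf_adherent k0 fin.
  by exists y.
have [yk Hyk] := choice Hex.
exists yk; split; last by apply: nearW => k; exact: (Hyk k).1.
apply/cvgrPdist_lt => e e0.
have e20 : 0 < e / 2 by rewrite divr_gt0.
pose e' := e / 2 / kap.
have e'0 : 0 < e' by rewrite divr_gt0.
have Hpair : (xk k, yb) @[k --> \oo] --> (xb, yb).
  exact: (cvg_pair Hxk (cvg_cst yb)).
have HUk : \forall k \near \oo, U (xk k, yb) := Hpair _ HU.
have Hi : forall i, \forall k \near \oo, (h i (xk k, yb) < e'%:E)%E /\
     ((l <= i)%N -> (- e'%:E < h i (xk k, yb))%E).
  move=> i.
  have Hc : h i (xk k, yb) @[k --> \oo] --> h i (xb, yb).
    exact: (cvg_comp _ _ Hpair (hcont i)).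
  have Hle : (h i (xb, yb) <= 0)%E.
    case: (leqP l i) => Hli; first by rewrite hgph.2.
    exact: hgph.1.
  have H1 : \forall k \near \oo, (h i (xk k, yb) < e'%:E)%E.
    have lt1 : (h i (xb, yb) < e'%:E)%E by apply: le_lt_trans Hle _; rewrite lte_fin.
    exact: (Hc _ (open_ereal_lt' lt1)).
  case: (leqP l i) => Hli.
    have H0 : h i (xb, yb) = 0%E by exact: hgph.2.
    have H2 : \forall k \near \oo, (- e'%:E < h i (xk k, yb))%E.
      have lt2 : (- e'%:E < h i (xb, yb))%E by rewrite H0 lteNl oppe0 lte_fin.
      exact: (Hc _ (open_ereal_gt' lt2)).
    by near=> k; split; [near: k; exact: H1 | move=> _; near: k; exact: H2].
  by near=> k; split; [near: k; exact: H1 | by []].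
have Hres : \forall k \near \oo, (residual l h (xk k) yb < e'%:E)%E.
  have Hall : \forall k \near \oo, forall i : 'I_p, (h i (xk k, yb) < e'%:E)%E /\
     ((l <= i)%N -> (- e'%:E < h i (xk k, yb))%E).
    exact: (@filter_forall _ _ (fun i k => (h i (xk k, yb) < e'%:E)%E /\
     ((l <= i)%N -> (- e'%:E < h i (xk k, yb))%E)) _ _ Hi).
  apply: filterS Hall => k Hk.
  rewrite /residual gt_max lte_fin e'0 /= gt_max; apply/andP; split.
    apply: (big_ind (fun t => t < e'%:E)%E) => //; first exact: ltNye.
      by move=> a b Ha Hb; rewrite gt_max Ha Hb.
    by move=> i _; exact: (Hk i).1.
  apply: (big_ind (fun t => t < e'%:E)%E) => //; first exact: ltNye.
    by move=> a b Ha Hb; rewrite gt_max Ha Hb.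
  by move=> i Hli; rewrite lte_absl (Hk i).1 andbT; exact: (Hk i).2.
have Hinv := near_infty_natSinv_lt (PosNum e20).
near=> k.
suff Hlt : enorm (yk k - yb) < e.
  rewrite distrC. apply: (@le_lt_trans _ _ (enorm (yk k - yb))) Hlt. exact: enorm_ge.
rewrite -lte_fin.
apply: lt_le_trans (Hyk k).2 _.
have -> : e = kap * e' + e / 2.
  by rewrite /e' mulrC divfK ?gt_eqF // [LHS]splitr.
rewrite EFinD; apply: leeD.
  apply: le_trans (Hreg _ _ _ (Hdom k)) _; first by near: k; exact: HUk.
  rewrite EFinM; apply: lee_wpmul2l; first by rewrite lee_fin ltW.
  by apply: ltW; near: k; exact: Hres.
rewrite lee_fin; apply: ltW; near: k; exact: Hinv.
Unshelve. all: by end_near.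
Qed.
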